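(* A descriptive $\mathsf{MS4}$-frame $\mathfrak{G}=(Y,R,E)$ validates $\mathsf{GKur}$ if and only if it satisfies the global Kuroda principle: $E[\operatorname{qmax}Y]=\operatorname{qmax}Y$ (equivalently, for every $x\in\operatorname{qmax}Y$, $E[x]\subseteq\operatorname{qmax}Y$).
   Context: $\mathsf{MIPC}$ is the smallest set of formulas in the bimodal language $\mathcal{L}_{\forall\exists}$ containing all theorems of $\mathsf{IPC}$; $\forall(p\wedge q)\leftrightarrow(\forall p\wedge\forall q)$, $\forall p\to p$, $\forall p\to\forall\forall p$; $\exists(p\vee q)\leftrightarrow(\exists p\vee\exists q)$, $p\to\exists p$, $\exists\exists p\to\exists p$, $(\exists p\wedge\exists q)\to\exists(\exists p\wedge q)$; $\exists\forall p\to\forall p$, $\exists p\to\forall\exists p$; closed under modus ponens, substitution and $\varphi/\forall\varphi$. $\mathsf{Kur}=\mathsf{MIPC}+\forall\neg\neg p\to\neg\neg\forall p$. $\mathsf{MS4}$ is the smallest set of formulas in the classical bimodal language $\mathcal{L}_{\Box\forall}$ containing all classical tautologies, the $\mathsf{S4}$ axioms for $\Box$, the $\mathsf{S5}$ axioms for $\forall$, and $\Box\forall p\to\forall\Box p$, closed under modus ponens, substitution, $\Box$- and $\forall$-necessitation. $\mathsf{GKur}=\mathsf{MS4}+\{\varphi^t:\mathsf{Kur}\vdash\varphi\}$, with $(-)^t$ the Gödel translation: $\bot^t=\bot$, $p^t=\Box p$, $(\varphi\wedge\psi)^t=\varphi^t\wedge\psi^t$, $(\varphi\vee\psi)^t=\varphi^t\vee\psi^t$,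 $(\varphi\to\psi)^t=\Box(\neg\varphi^t\vee\psi^t)$, $(\forall\varphi)^t=\Box\forall\varphi^t$, $(\exists\varphi)^t=\exists\varphi^t$ (where $\exists=\neg\forall\neg$). A descriptive $\mathsf{MS4}$-frame is $(Y,R,E)$ with $Y$ a Stone space, $R$ a continuous quasi-order, $E$ a continuous equivalence relation (continuous: $R[x]$ closed for all $x$, $R^{-1}[U]$ clopen for clopen $U$), such that $xEy$, $yRz$ imply $\exists u$ with $xRu$, $uEz$. Valuations assign clopen sets; $\Box$ is interpreted via $R$, $\forall$ via $E$. $\operatorname{qmax}Y=\{x: xRy\Rightarrow yRx\}$. *)

(* Defs.v *)
From mathcomp Require Import all_boot all_order.
From mathcomp Require Import all_classical topology.
Set Implicit Arguments. Unset Strict Implicit. Unset Printing Implicit Defensive.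
Local Open Scope classical_set_scope.

Inductive iform : Type :=
| IVar : nat -> iform
| IBot : iform
| IAnd : iform -> iform -> iform
| IOr  : iform -> iform -> iform
| IImp : iform -> iform -> iform
| IAll : iform -> iform
| IEx  : iform -> iform.

Definition INeg (a : iform) := IImp a IBot.
Definition IIff (a b : iform) := IAnd (IImp a b) (IImp b a).

Fixpoint isubst (s : nat -> iform) (a : iform) : iform :=
  match a with
  | IVar n => s n
  | IBot => IBot
  | IAnd a b => IAnd (isubst s a) (isubst s b)
  | IOr a b => IOr (isubst s a) (isubst s b)
  | IImp a b => IImp (isubst s a) (isubst s b)
  | IAll a => IAll (isubst s a)
  | IEx a => IEx (isubst s a)
  end.

Definition ip := IVar 0.
Definition iq := IVar 1.
Definition ir := IVar 2.

(* Standard Hilbert axioms for IPC (in the letters p q r; closure under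
   substitution and modus ponens yields all theorems of IPC, and all their
   substitution instances in the modal language). *)
Inductive IPC_axiom : iform -> Prop :=
| ipc_K  : IPC_axiom (IImp ip (IImp iq ip))
| ipc_S  : IPC_axiom (IImp (IImp ip (IImp iq ir)) (IImp (IImp ip iq) (IImp ip ir)))
| ipc_A1 : IPC_axiom (IImp (IAnd ip iq) ip)
| ipc_A2 : IPC_axiom (IImp (IAnd ip iq) iq)
| ipc_A3 : IPC_axiom (IImp ip (IImp iq (IAnd ip iq)))
| ipc_O1 : IPC_axiom (IImp ip (IOr ip iq))
| ipc_O2 : IPC_axiom (IImp iq (IOr ip iq))
| ipc_O3 : IPC_axiom (IImp (IImp ip ir) (IImp (IImp iq ir) (IImp (IOr ip iq) ir)))
| ipc_EFQ : IPC_axiom (IImp IBot ip).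

Inductive MIPC_axiom : iform -> Prop :=
| mipc_ipc a : IPC_axiom a -> MIPC_axiom a
| mipc_all_and : MIPC_axiom (IIff (IAll (IAnd ip iq)) (IAnd (IAll ip) (IAll iq)))
| mipc_all_T : MIPC_axiom (IImp (IAll ip) ip)
| mipc_all_4 : MIPC_axiom (IImp (IAll ip) (IAll (IAll ip)))
| mipc_ex_or : MIPC_axiom (IIff (IEx (IOr ip iq)) (IOr (IEx ip) (IEx iq)))
| mipc_ex_T : MIPC_axiom (IImp ip (IEx ip))
| mipc_ex_4 : MIPC_axiom (IImp (IEx (IEx ip)) (IEx ip))
| mipc_ex_and : MIPC_axiom (IImp (IAnd (IEx ip) (IEx iq)) (IEx (IAnd (IEx ip) iq)))
| mipc_ex_all : MIPC_axiom (IImp (IEx (IAll ip)) (IAll ip))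
| mipc_ex_all2 : MIPC_axiom (IImp (IEx ip) (IAll (IEx ip))).

Inductive Kur_thm : iform -> Prop :=
| kur_ax a : MIPC_axiom a -> Kur_thm a
| kur_kur : Kur_thm (IImp (IAll (INeg (INeg ip))) (INeg (INeg (IAll ip))))
| kur_mp a b : Kur_thm (IImp a b) -> Kur_thm a -> Kur_thm b
| kur_subst s a : Kur_thm a -> Kur_thm (isubst s a)
| kur_nec a : Kur_thm a -> Kur_thm (IAll a).

Inductive cform : Type :=
| CVar : nat -> cform
| CBot : cform
| CAnd : cform -> cform -> cform
| COr  : cform -> cform -> cform
| CImp : cform -> cform -> cform
| CBox : cform -> cform
| CAll : cform -> cform.

Definition CNeg (a : cform) := CImp a CBot.
Definition CEx (a : cform) := CNeg (CAll (CNeg a)).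

Fixpoint csubst (s : nat -> cform) (a : cform) : cform :=
  match a with
  | CVar n => s n
  | CBot => CBot
  | CAnd a b => CAnd (csubst s a) (csubst s b)
  | COr a b => COr (csubst s a) (csubst s b)
  | CImp a b => CImp (csubst s a) (csubst s b)
  | CBox a => CBox (csubst s a)
  | CAll a => CAll (csubst s a)
  end.

Definition cp := CVar 0.
Definition cq := CVar 1.
Definition cr := CVar 2.

Inductive CPC_axiom : cform -> Prop :=
| cpc_K  : CPC_axiom (CImp cp (CImp cq cp))
| cpc_S  : CPC_axiom (CImp (CImp cp (CImp cq cr)) (CImp (CImp cp cq) (CImp cp cr)))
| cpc_A1 : CPC_axiom (CImp (CAnd cp cq) cp)
| cpc_A2 : CPC_axiom (CImp (CAnd cp cq) cq)
| cpc_A3 : CPC_axiom (CImp cp (CImp cq (CAnd cp cq)))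
| cpc_O1 : CPC_axiom (CImp cp (COr cp cq))
| cpc_O2 : CPC_axiom (CImp cq (COr cp cq))
| cpc_O3 : CPC_axiom (CImp (CImp cp cr) (CImp (CImp cq cr) (CImp (COr cp cq) cr)))
| cpc_EFQ : CPC_axiom (CImp CBot cp)
| cpc_DNE : CPC_axiom (CImp (CNeg (CNeg cp)) cp).

Inductive MS4_axiom : cform -> Prop :=
| ms4_cpc a : CPC_axiom a -> MS4_axiom a
| ms4_box_K : MS4_axiom (CImp (CBox (CImp cp cq)) (CImp (CBox cp) (CBox cq)))
| ms4_box_T : MS4_axiom (CImp (CBox cp) cp)
| ms4_box_4 : MS4_axiom (CImp (CBox cp) (CBox (CBox cp)))
| ms4_all_K : MS4_axiom (CImp (CAll (CImp cp cq)) (CImp (CAll cp) (CAll cq)))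
| ms4_all_T : MS4_axiom (CImp (CAll cp) cp)
| ms4_all_5 : MS4_axiom (CImp (CEx cp) (CAll (CEx cp)))
| ms4_left : MS4_axiom (CImp (CBox (CAll cp)) (CAll (CBox cp))).

Fixpoint gtrans (a : iform) : cform :=
  match a with
  | IVar n => CBox (CVar n)
  | IBot => CBot
  | IAnd a b => CAnd (gtrans a) (gtrans b)
  | IOr a b => COr (gtrans a) (gtrans b)
  | IImp a b => CBox (COr (CNeg (gtrans a)) (gtrans b))
  | IAll a => CBox (CAll (gtrans a))
  | IEx a => CEx (gtrans a)
  end.

Inductive GKur_thm : cform -> Prop :=
| gkur_ax a : MS4_axiom a -> GKur_thm a
| gkur_trans a : Kur_thm a -> GKur_thm (gtrans a)
| gkur_mp a b : GKur_thm (CImp a b) -> GKur_thm a -> GKur_thm b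
| gkur_subst s a : GKur_thm a -> GKur_thm (csubst s a)
| gkur_box_nec a : GKur_thm a -> GKur_thm (CBox a)
| gkur_all_nec a : GKur_thm a -> GKur_thm (CAll a).

Definition stone_space (T : topologicalType) : Prop :=
  [/\ compact [set: T], hausdorff_space T &
      forall (x : T) (A : set T), nbhs x A ->
        exists U : set T, [/\ clopen U, U x & U `<=` A]].

Definition continuous_rel (T : topologicalType) (R : T -> T -> Prop) : Prop :=
  (forall x, closed [set y | R x y]) /\
  (forall U : set T, clopen U -> clopen [set x | exists2 y, R x y & U y]).

Definition descriptive_MS4_frame (T : topologicalType)
    (R E : T -> T -> Prop) : Prop :=
  stone_space T /\
  ((forall x, R x x) /\ (forall x y z, R x y -> R y z -> R x z)) /\
  continuous_rel R /\
  ((forall x, E x x) /\ (forall x y, E x y -> E y x) /\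
   (forall x y z, E x y -> E y z -> E x z)) /\
  continuous_rel E /\
  (forall x y z, E x y -> R y z -> exists2 u, R x u & E u z).

Fixpoint truth (T : Type) (R E : T -> T -> Prop) (V : nat -> set T)
    (a : cform) : set T :=
  match a with
  | CVar n => V n
  | CBot => set0
  | CAnd a b => truth R E V a `&` truth R E V b
  | COr a b => truth R E V a `|` truth R E V b
  | CImp a b => ~` truth R E V a `|` truth R E V b
  | CBox a => [set x | forall y, R x y -> truth R E V a y]
  | CAll a => [set x | forall y, E x y -> truth R E V a y]
  end.

Definition frame_valid (T : topologicalType) (R E : T -> T -> Prop)
    (a : cform) : Prop :=
  forall V : nat -> set T, (forall n, clopen (V n)) ->
    truth R E V a = [set: T].

Definition validates_GKur (T : topologicalType) (R E : T -> T -> Prop) : Prop :=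
  forall a, GKur_thm a -> frame_valid R E a.

Definition qmax (T : Type) (R : T -> T -> Prop) : set T :=
  [set x | forall y, R x y -> R y x].

Definition rel_image (T : Type) (E : T -> T -> Prop) (A : set T) : set T :=
  [set y | exists2 x, A x & E x y].

(* Main.v *)
Require Import Defs.
From mathcomp Require Import all_boot all_order.
From mathcomp Require Import all_classical topology.
Local Open Scope classical_set_scope.

Ltac unf := cbn; unfold setI, setU, setC, set0, mkset in *; cbn in *.

Section Sem.
Variables (T : Type) (R E : T -> T -> Prop).
Hypotheses (Rrefl : forall x, R x x) (Rtr : forall {x y z}, R x y -> R y z -> R x z)
  (Erefl : forall x, E x x) (Esym : forall {x y}, E x y -> E y x)
  (Etr : forall {x y z}, E x y -> E y z -> E x z)
  (Ecomm : forall {x y z}, E x y -> R y z -> exists2 u, R x u & E u z).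

Lemma up_gtrans a V x y : truth R E V (gtrans a) x -> R x y -> truth R E V (gtrans a) y.
Proof.
elim: a x y => [n|| a IHa b IHb| a IHa b IHb| a IHa b IHb| a IHa| a IHa] x y /=; unf.
- by move=> H xy z yz; apply: H; exact: Rtr xy yz.
- by [].
- by move=> [ha hb] xy; split; [exact: IHa ha xy|exact: IHb hb xy].
- by move=> [ha|hb] xy; [left; exact: IHa ha xy|right; exact: IHb hb xy].
- by move=> H xy z yz; apply: H; exact: Rtr xy yz.
- by move=> H xy z yz; apply: H; exact: Rtr xy yz.
- move=> [H|//] xy; left => K; apply: H => z xz.
  case: (pselect (truth R E V (gtrans a) z)) => Hz; last by left.
  have [u yu uz] := Ecomm (Esym xz) xy.
  by case: (K u (Esym uz)) => // /(_ (IHa _ _ Hz yu)).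
Qed.


Lemma gtrans_subst s a V : truth R E V (gtrans (isubst s a)) =
  truth R E (fun n => truth R E V (gtrans (s n))) (gtrans a).
Proof.
elim: a => [n|| a IHa b IHb| a IHa b IHb| a IHa b IHb| a IHa| a IHa] /=;
  rewrite ?IHa ?IHb //.
rewrite predeqE => x; split => [H y xy|H]; first exact: up_gtrans H xy.
exact: H.
Qed.

Lemma csubst_truth s a V : truth R E V (csubst s a) =
  truth R E (fun n => truth R E V (s n)) a.
Proof.
by elim: a => [n|| a IHa b IHb| a IHa b IHb| a IHa b IHb| a IHa| a IHa] /=;
  rewrite ?IHa ?IHb.
Qed.


Lemma imp_or (P Q : Prop) : (P -> Q) -> ~ P \/ Q.
Proof. by case: (pselect P) => p H; [right; exact: H|left]. Qed.

Lemma or_imp (P Q : Prop) : ~ P \/ Q -> P -> Q.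
Proof. by case. Qed.

Lemma gimp V a b x : (forall y, R x y -> truth R E V (gtrans a) y -> truth R E V (gtrans b) y) ->
  truth R E V (gtrans (IImp a b)) x.
Proof.
move=> H y xy; unf; case: (pselect (truth R E V (gtrans a) y)) => Ay.
  by right; exact: H.
by left; left.
Qed.

Lemma gimpE {V a b x} : truth R E V (gtrans (IImp a b)) x ->
  forall y, R x y -> truth R E V (gtrans a) y -> truth R E V (gtrans b) y.
Proof. by move=> H y xy Ay; case: (H y xy) => // -[]. Qed.

Lemma gex V a x : truth R E V (gtrans (IEx a)) x <-> exists2 z, E x z & truth R E V (gtrans a) z.
Proof.
split => /=; unf.
- case=> [H|//]; case: (pselect (exists2 z, E x z & truth R E V (gtrans a) z)) => // nz.
  exfalso; apply: H => z xz; left => Az; apply: nz; by exists z.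
- by case=> z xz Az; left => /(_ z xz); case.
Qed.

Lemma gneg V a x : truth R E V (gtrans (INeg a)) x <-> forall y, R x y -> ~ truth R E V (gtrans a) y.
Proof.
split => [H y xy Ay|H]; first by have := gimpE H _ xy Ay.
by apply: gimp => y xy Ay; apply: (H y xy).
Qed.


Arguments up_gtrans {a V x y}.

Lemma gexE {V a x} : truth R E V (gtrans (IEx a)) x -> exists2 z, E x z & truth R E V (gtrans a) z.
Proof. exact: (proj1 (gex V a x)). Qed.
Lemma gexI {V a x} z : E x z -> truth R E V (gtrans a) z -> truth R E V (gtrans (IEx a)) x.
Proof. by move=> xz Az; apply/gex; exists z. Qed.

Lemma giff V a b x : truth R E V (gtrans (IImp a b)) x -> truth R E V (gtrans (IImp b a)) x ->
  truth R E V (gtrans (IIff a b)) x.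
Proof. by split. Qed.

Lemma ipc_sound a : IPC_axiom a -> forall V x, truth R E V (gtrans a) x.
Proof.
case=> V x.
- apply: gimp => y xy Hp; apply: gimp => z yz _; exact: up_gtrans Hp yz.
- apply: gimp => y xy H1; apply: gimp => z yz H2; apply: gimp => w zw Ha.
  have Hb := gimpE H2 _ zw Ha.
  have H3 := gimpE H1 _ (Rtr yz zw) Ha.
  exact: gimpE H3 _ (Rrefl w) Hb.
- by apply: gimp => y _ [].
- by apply: gimp => y _ [].
- apply: gimp => y _ Hp; apply: gimp => z yz Hq; split; [exact: up_gtrans Hp yz|exact: Hq].
- by apply: gimp => y _ Hp; left.
- by apply: gimp => y _ Hp; right.
- apply: gimp => y _ H1; apply: gimp => z yz H2; apply: gimp => w zw [Hp|Hq].
    exact: gimpE H1 _ (Rtr yz zw) Hp.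
  exact: gimpE H2 _ zw Hq.
- by apply: gimp => y _ [].
Qed.

Lemma mipc_sound a : MIPC_axiom a -> forall V x, truth R E V (gtrans a) x.
Proof.
case; first exact: ipc_sound.
- move=> V x; apply: giff.
    apply: gimp => y _ H; split => v yv u vu; by case: (H v yv u vu).
  by apply: gimp => y _ [H1 H2] v yv u vu; split; [exact: H1 v yv u vu|exact: H2 v yv u vu].
- by move=> V x; apply: gimp => y _ /= H; apply: (H y (Rrefl y) y (Erefl y)).
- move=> V x; apply: gimp => y _ H v yv u vu v' uv' u' v'u'.
  have [t vt tv'] := Ecomm vu uv'.
  exact: H t (Rtr yv vt) u' (Etr tv' v'u').
- move=> V x; apply: giff.
    apply: gimp => y _ /gexE [z yz [Pz|Qz]].
      by left; apply/gex; exists z.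
    by right; apply/gex; exists z.
  apply: gimp => y _ [H|H].
    case: (proj1 (gex V ip y) H) => z yz Pz; apply/gex; exists z => //; by left.
  case: (proj1 (gex V iq y) H) => z yz Pz; apply/gex; exists z => //; by right.
- by move=> V x; apply: gimp => y _ Py; apply/gex; exists y.
- move=> V x; apply: gimp => y _ /gexE [z yz /gexE [w zw Pw]]; apply/gex; exists w => //.
  exact: Etr yz zw.
- move=> V x; apply: gimp => y _ [H1 H2]; case: (gexE (V:=V) (a:=ip) (x:=y) H1) => c ya Pa; case: (gexE (V:=V) (a:=iq) (x:=y) H2) => b yb Qb; apply/gex; exists b => //.
  by split => //; apply/gex; exists c => //; exact: Etr (Esym yb) ya.
- move=> V x; apply: gimp => y _ /gexE [z yz H] v yv u vu.
  have [t zt tv] := Ecomm (Esym yz) yv.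
  exact: H t zt u (Etr tv vu).
- move=> V x; apply: gimp => y _ H v yv u vu.
  have /gexE [w vw Pw] := up_gtrans (a := IEx ip) H yv.
  by apply: (gexI (V:=V) (a:=ip) (x:=u) w) => //; exact: Etr (Esym vu) vw.
Qed.

Lemma ms4_sound a : MS4_axiom a -> forall V x, truth R E V a x.
Proof.
case.
- move=> ?; case=> V x; unf; case: (pselect (V 0 x)); case: (pselect (V 1 x)); case: (pselect (V 2 x)); tauto.
- move=> V x; unf; apply: imp_or => H1; apply: imp_or => H2 y xy.
  by case: (H1 y xy) => //; move/(_ (H2 y xy)).
- by move=> V x; unf; apply: imp_or => H; exact: H x (Rrefl x).
- by move=> V x; unf; apply: imp_or => H y xy z yz; exact: H z (Rtr xy yz).
- move=> V x; unf; apply: imp_or => H1; apply: imp_or => H2 y xy.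
  by case: (H1 y xy) => //; move/(_ (H2 y xy)).
- by move=> V x; unf; apply: imp_or => H; exact: H x (Erefl x).
- move=> V x; unf; apply: imp_or => -[H|//] y xy; left => K; apply: H => z xz.
  exact: K z (Etr (Esym xy) xz).
- move=> V x; unf; apply: imp_or => H y xy z yz.
  have [u xu uz] := Ecomm xy yz; exact: H u xu z uz.
Qed.

Section Kur.
Hypotheses (qex : forall w, exists2 t, R w t & qmax R t)
  (kur : forall x y, qmax R x -> E x y -> qmax R y).

Lemma kur_sound V x : truth R E V (gtrans (IImp (IAll (INeg (INeg ip))) (INeg (INeg (IAll ip))))) x.
Proof.
apply: gimp => y _ H; apply/gneg => w yw Hn.
have [q wq qq] := qex w.
apply: (proj1 (gneg V (IAll ip) w) Hn q wq) => v qv u vu.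
have vq : qmax R v.
  move=> t vt; have qt := Rtr qv vt; exact: Rtr (qq t qt) qv.
have uq := kur _ _ vq vu.
have Hu := H v (Rtr yw (Rtr wq qv)) u vu.
case: (pselect (truth R E V (gtrans ip) u)) => // nAu.
exfalso; apply: (proj1 (gneg V (INeg ip) u) Hu u (Rrefl u)).
apply/gneg => s us As; apply: nAu.
exact: up_gtrans As (uq s us).
Qed.

Lemma Kur_sound a : Kur_thm a -> forall V x, truth R E V (gtrans a) x.
Proof.
elim=> {a}.
- exact: mipc_sound.
- exact: kur_sound.
- move=> a b _ Hab _ Ha V x; exact: gimpE (Hab V x) _ (Rrefl x) (Ha V x).
- by move=> s a _ IH V x; rewrite gtrans_subst; apply: IH.
- by move=> a _ IH V x y _ z _; apply: IH.
Qed.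

Lemma GKur_sound a : GKur_thm a -> forall V x, truth R E V a x.
Proof.
elim=> {a}.
- exact: ms4_sound.
- exact: Kur_sound.
- by move=> a b _ Hab _ Ha V x; case: (Hab V x) => // /(_ (Ha V x)).
- by move=> s a _ IH V x; rewrite csubst_truth; apply: IH.
- by move=> a _ IH V x y _; apply: IH.
- by move=> a _ IH V x y _; apply: IH.
Qed.

End Kur.

End Sem.
Lemma qmax_exists (T : topologicalType) (R : T -> T -> Prop) :
  compact [set: T] -> (forall x, closed [set y | R x y]) ->
  (forall x, R x x) -> (forall x y z, R x y -> R y z -> R x z) ->
  forall w, exists2 t, R w t & qmax R t.
Proof.
move=> cT Rcl Rrefl Rtr w.
pose S := {t : T | R w t}.
pose rS := fun a b : S => `[< R (sval a) (sval b) >].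
have [| | |t tmax] := @ZL_preorder S (exist _ w (Rrefl w)) rS.
- by move=> a; apply/asboolP.
- by move=> a b c /asboolP ab /asboolP bc; apply/asboolP; exact: Rtr ab bc.
- move=> A Atot.
  have [[a Aa]|A0] := pselect (exists a, A a); last first.
    exists (exist _ w (Rrefl w)) => s As; exfalso; apply: A0; by exists s.
  pose F := [set B : set T | exists2 s, A s & [set y | R (sval s) y] `<=` B].
  have FF : ProperFilter F.
    split.
    + by case=> [[s Rs] As]; move: (Rrefl s) => Rss; move/(_ s Rss) => //.
    + split.
      * by exists a.
      * move=> B C [s As sB] [s' As' sC].
        have [/asboolP ss'|/asboolP s's] := Atot s s' As As'.
        - by exists s' => // y Ry; split; [apply: sB; exact: Rtr ss' Ry|exact: sC].
        - by exists s => // y Ry; split; [exact: sB|apply: sC; exact: Rtr s's Ry].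
      * by move=> B C BC [s As sB]; exists s => //; exact: subset_trans BC.
  have [p [_ clp]] := cT F FF (ex_intro2 _ _ a Aa (fun _ _ => I)).
  have pin : forall s, A s -> R (sval s) p.
    move=> s As.
    have E := Rcl (sval s); move/closure_id: E => E.
    suff : closure [set y | R (sval s) y] p by rewrite -E.
    by move=> C nC; apply: clp => //; exists s.
  have wp : R w p by apply: Rtr (svalP a) (pin a Aa).
  by exists (exist _ p wp) => s As; apply/asboolP; exact: pin.
- exists (sval t); first exact: svalP.
  move=> y ty.
  have wy : R w y by exact: Rtr (svalP t) ty.
  have := tmax (exist _ y wy) (introT (asboolP _) ty).
  by move/asboolP.
Qed.

Theorem theorem3p15 (T : topologicalType) (R E : T -> T -> Prop) :
  descriptive_MS4_frame R E ->
  (validates_GKur R E <-> rel_image E (qmax R) = qmax R).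
Proof.
move=> [[cT _ basis] [[Rrefl Rtr] [[Rcl Rclo] [[Erefl [Esym Etr]] [[_ _] Ecomm]]]]].
have qex := @qmax_exists T R cT Rcl Rrefl Rtr.
split; last first.
  move=> eq a Ha V _; rewrite predeqE => x; split => // _.
  have kur : forall u v, qmax R u -> E u v -> qmax R v.
    by move=> u v qu uv; rewrite -eq; exists u.
  exact: (@GKur_sound T R E Rrefl Rtr Erefl Esym Etr Ecomm qex kur _ Ha V x).
move=> H; apply/seteqP; split; last by move=> x qx; exists x.
move=> y [x qx xy] z yz.
case: (pselect (R z y)) => // nzy; exfalso.
have nb : nbhs y (~` [set t | R z t]).
  by apply: open_nbhs_nbhs; split => //; apply: closed_openC.
have [C [cC Cy CRz]] := basis y _ nb.
pose D := ~` [set t | exists2 s, R t s & C s].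
have cD : clopen D by apply: clopenC => //; exact: Rclo.
pose W := [set t | exists2 s, R t s & D s] `&` ~` D.
have cW : clopen W by apply: clopenI; [exact: Rclo|exact: clopenC].
pose V := fun _ : nat => ~` W.
have cV : forall n, clopen (V n) by move=> n; exact: clopenC.
have Hk := H _ (gkur_trans kur_kur) V cV.
have Hx : truth R E V (gtrans (IImp (IAll (INeg (INeg ip))) (INeg (INeg (IAll ip))))) x
  by rewrite Hk.
have Ax : truth R E V (gtrans (IAll (INeg (INeg ip)))) x.
  move=> v _ u _; change (truth R E V (gtrans (INeg (INeg ip))) u); apply: (proj2 (gneg T R E V (INeg ip) u)) => t ut Hn.
  have [q tq qq] := qex t.
  apply: (proj1 (gneg T R E V ip t) Hn q tq).
  move=> s qs [[s' ss' Ds'] nDs].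
  apply: nDs => -[r sr Cr]; apply: Ds'.
  exists r => //; apply: Rtr _ _ _ (Rtr _ _ _ (qq s' (Rtr _ _ _ qs ss')) qs) sr.
have Bx := gimpE T R E Hx _ (Rrefl x) Ax.
apply: (proj1 (gneg T R E V (INeg (IAll ip)) x) Bx x (Rrefl x)).
apply: (proj2 (gneg T R E V (IAll ip) x)) => v xv Hall.
have := Hall x (qx v xv) y xy y (Rrefl y); apply.
split.
  exists z => // -[r zr Cr]; exact: CRz Cr zr.
by apply; exists y.
Qed.
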